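(* An allocation algorithm $A$ is truthful without money and with verification for CAs with (unknown) $k$-minded bidders if and only if $A$ is $k$-set monotone, where $A$ is called $k$-set monotone if for every bidder $i$, every $\mathbf b_{-i}$ and every $a=(z,\mathcal T)\in D_i$: if $A_i(a,\mathbf b_{-i})=T$, then for every $c=(w,\mathcal W)\in D_i$ such that $\sigma(T\mid c)=W$ and $w(W)\ge z(T)$, we have $w(A_i(c,\mathbf b_{-i}))\ge w(W)$.
   Context: Combinatorial auction setting: a set $\mathsf U$ of $m$ goods and $n$ bidders. The true type of bidder $i$ is $t_i=(v_i,\mathcal S_i)$, where $\mathcal S_i$ is a private collection of $k$ nonempty subsets of $\mathsf U$ and $v_i:\mathcal S_i\to\mathbb R_{\ge0}$ is private, extended to all $S\subseteq\mathsf U$ by $v_i(S)=\max\{v_i(S'):S'\in\mathcal S_i,\ S'\subseteq S\}$ ($0$ if none; $v_i(\emptyset)=0$). A declaration of bidder $i$ is any pair $c=(w,\mathcal W)$ of the same form, extended the same way; $D_i$ is the set of all declarations of $i$. For a declaration $c=(w,\mathcal W)$ and $T\subseteq\mathsf U$, $\sigma(T\mid c)$ denotes an inclusion-maximal set in $\mathcal W\cup\{\emptyset\}$ contained in $T$ with $w(\sigma(T\mid c))=w(T)$. An allocation algorithm $A$ maps declaration profiles $\mathbf b$ to feasible allocations (each good allocated at most as many times as its supply) and is exact: $A_i(\mathbf b)\in\mathcal W_i\cup\{\emptyset\}$ where $b_i=(w_i,\mathcal W_i)$. Verification: bidder $i$ with true type $t_i$, facing $\mathbf b_{-i}$, may declare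 $b_i=(z,\mathcal T)$ only if $z(A_i(b_i,\mathbf b_{-i}))\le v_i(A_i(b_i,\mathbf b_{-i}))$. $A$ is truthful without money and with verification if for all $i$, $\mathbf b_{-i}$, true types $t_i\in D_i$ and declarations $b_i\in D_i$ permitted by verification, $v_i(A_i(t_i,\mathbf b_{-i}))\ge v_i(A_i(b_i,\mathbf b_{-i}))$. *)

(* Defs.v *)
From HB Require Import structures.
From mathcomp Require Import all_boot all_order all_algebra.
Set Implicit Arguments. Unset Strict Implicit. Unset Printing Implicit Defensive.
Import Order.TTheory GRing.Theory Num.Theory.
Local Open Scope ring_scope.

(* A declaration (w, W) of a bidder over the goods U with values in R:
   dsets = the collection W of requested bundles,
   dval  = the values w (a finite function; off W it is required to be 0,
           so that declarations are in bijection with pairs (w, W)). *)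
Record decl (U : finType) (R : realFieldType) := Decl {
  dsets : {set {set U}};
  dval  : {ffun {set U} -> R}
}.

Definition valid_decl (U : finType) (R : realFieldType) (k : nat)
    (d : decl U R) : Prop :=
  [/\ #|dsets d| = k,
      set0 \notin dsets d,
      (forall S, S \in dsets d -> 0 <= dval d S) &
      (forall S, S \notin dsets d -> dval d S = 0)].

Definition ext (U : finType) (R : realFieldType) (d : decl U R)
    (T : {set U}) : R :=
  \big[Num.max/0]_(S in dsets d | S \subset T) dval d S.

(* W is a (possible value of) sigma(T | d): an inclusion-maximal set of
   W_d \cup {emptyset} contained in T with w(W) = w(T). *)
Definition is_sigma (U : finType) (R : realFieldType) (d : decl U R)
    (T W : {set U}) : Prop :=
  [/\ (W \in dsets d) || (W == set0), W \subset T, ext d W = ext d T &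
      forall W', (W' \in dsets d) || (W' == set0) -> W' \subset T ->
        ext d W' = ext d T -> W \subset W' -> W' = W].

Definition upd (n : nat) (T : Type) (b : {ffun 'I_n -> T}) (i : 'I_n) (a : T)
  : {ffun 'I_n -> T} := [ffun j => if j == i then a else b j].

Definition feasible (U : finType) (n : nat) (supply : U -> nat)
    (x : {ffun 'I_n -> {set U}}) : Prop :=
  forall g : U, (#|[set j | g \in x j]| <= supply g)%N.

Definition alloc_algorithm (U : finType) (R : realFieldType) (n k : nat)
    (supply : U -> nat)
    (A : {ffun 'I_n -> decl U R} -> {ffun 'I_n -> {set U}}) : Prop :=
  forall b : {ffun 'I_n -> decl U R}, (forall j, valid_decl k (b j)) ->
    feasible supply (A b) /\
    (forall j, (A b j \in dsets (b j)) || (A b j == set0)).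

(* Truthful without money and with verification. The profile b stands for
   b_{-i} (its i-th entry is irrelevant). *)
Definition truthful_verif (U : finType) (R : realFieldType) (n k : nat)
    (A : {ffun 'I_n -> decl U R} -> {ffun 'I_n -> {set U}}) : Prop :=
  forall (i : 'I_n) (b : {ffun 'I_n -> decl U R}),
    (forall j, j != i -> valid_decl k (b j)) ->
    forall t a : decl U R, valid_decl k t -> valid_decl k a ->
      ext a (A (upd b i a) i) <= ext t (A (upd b i a) i) ->
      ext t (A (upd b i a) i) <= ext t (A (upd b i t) i).

Definition k_set_monotone (U : finType) (R : realFieldType) (n k : nat)
    (A : {ffun 'I_n -> decl U R} -> {ffun 'I_n -> {set U}}) : Prop :=
  forall (i : 'I_n) (b : {ffun 'I_n -> decl U R}),
    (forall j, j != i -> valid_decl k (b j)) ->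
    forall a : decl U R, valid_decl k a ->
    forall T : {set U}, A (upd b i a) i = T ->
    forall (c : decl U R) (W : {set U}), valid_decl k c ->
      is_sigma c T W -> ext a T <= ext c W ->
      ext c W <= ext c (A (upd b i c) i).

(* Main.v *)
Require Import Defs.
From HB Require Import structures.
From mathcomp Require Import all_boot all_order all_algebra.
Import Order.TTheory GRing.Theory Num.Theory.
Local Open Scope ring_scope.

Lemma ext_mono (U : finType) (R : realFieldType) (d : decl U R) (S T : {set U}) :
  S \subset T -> ext d S <= ext d T.
Proof.
move=> ST; rewrite /ext; apply: bigmax_le; first exact: bigmax_ge_id.
move=> i /andP[id iS]; apply: le_bigmax_cond; rewrite id /=.
exact: subset_trans iS ST.
Qed.

Lemma ext_attain {U : finType} {R : realFieldType} (d : decl U R) (T : {set U}) :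
  ext d T = 0 \/ exists2 S, (S \in dsets d) && (S \subset T) & ext d T = dval d S.
Proof.
rewrite /ext; apply: (big_ind (fun x => x = 0 \/ exists2 S, (S \in dsets d) && (S \subset T) & x = dval d S)).
- by left.
- move=> x y Hx Hy; rewrite /Num.max; by case: ifP.
- by move=> S HS; right; exists S.
Qed.

Lemma sigma_exists (U : finType) (R : realFieldType) (k : nat) (d : decl U R) (T : {set U}) :
  valid_decl k d -> exists W, is_sigma d T W.
Proof.
case=> _ n0 _ _.
pose P := fun W' => [&& (W' \in dsets d) || (W' == set0), W' \subset T & ext d W' == ext d T].
have [W0 PW0] : exists W0, P W0.
  case: (ext_attain d T) => [E0 | [S /andP[Sd ST] ES]].
  - exists set0; rewrite /P eqxx orbT sub0set /= E0; apply/eqP.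
    rewrite /ext big_pred0 // => S; apply/negbTE; apply/andP => [[Sd]].
    rewrite subset0 => /eqP SE; by move: n0; rewrite -SE Sd.
  - exists S; rewrite /P Sd ST /=; apply/eqP/le_anti.
    rewrite ext_mono //= ES /ext; apply: le_bigmax_cond; by rewrite Sd subxx.
case: (@arg_maxnP _ W0 P (fun W => #|W|) PW0) => W /and3P[H1 H2 /eqP H3] Hmax.
exists W; split => // W' H1' H2' H3' WW'.
apply/eqP; rewrite eq_sym eqEcard WW' /=.
apply: Hmax; by rewrite /P H1' H2' H3' eqxx.
Qed.

Theorem theorem2 (U : finType) (R : realFieldType) (n k : nat)
    (supply : U -> nat)
    (A : {ffun 'I_n -> decl U R} -> {ffun 'I_n -> {set U}}) :
  alloc_algorithm k supply A ->
  (truthful_verif k A <-> k_set_monotone k A).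
Proof.
move=> _; split.
- move=> Htr i b Hb a Ha T HT c W Hc [_ _ EW _] Hle.
  rewrite EW -HT; apply: (Htr i b Hb c a Hc Ha); by rewrite HT -EW.
- move=> Hm i b Hb t a Ht Ha Hle.
  have [W HW] := @sigma_exists _ _ _ t (A (upd b i a) i) Ht.
  have EW : ext t W = ext t (A (upd b i a) i) by case: HW.
  rewrite -EW; apply: (Hm i b Hb a Ha _ erefl t W Ht HW); by rewrite EW.
Qed.
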